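(* Let $G\le S_n$ be a Frobenius group with Frobenius kernel $N=\{u_1,\dots,u_{|N|}\}$ and Frobenius complement $H=\{v_1,\dots,v_h\}$, $h=|H|$, so that $G=\{u_iv_j\}$. Then the Gale dual of $P(G)$ is (up to linear change of coordinates) the vector configuration in $\mathbb{R}^{h-1}$ consisting of $|N|$ copies of the all-ones vector $\mathbf{1}$ together with $|N|$ copies of $-e_i$ for each $1\le i\le h-1$, where $e_i$ is the $i$-th standard basis vector. Specifically, the Gale vector corresponding to $u_iv_j$ is $\mathbf{1}$ if $j=1$ and $-e_{j-1}$ otherwise.
   Context: Each $g\in S_n$ is identified with its $n\times n$ permutation matrix (entry $(i,j)$ is $1$ iff $g(i)=j$); $P(G)=\mathrm{conv}\{g:g\in G\}$. $G\le S_n$ is Frobenius if it has a proper subgroup $H$ (Frobenius complement) with $H\cap xHx^{-1}=\{e\}$ for all $x\in G\setminus H$; the Frobenius kernel $N$ (identity together with all fixed-point-free elements of $G$) is a subgroup with $N\cap H=\{e\}$ and $G=NH$. For a polytope with vertices $w_1,\dots,w_r$ and dimension $d$, its Gale dual is the configuration of columns in $\mathbb{R}^{r-d-1}$ of a matrix whose rows form a basis of $\{\lambda\in\mathbb{R}^r:\sum\lambda_iw_i=0\}$, unique up to linear change of coordinates.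
   Formalization: G also acts transitively on {1,…,n}, and N being a subgroup with N ∩ H = {e} and G = NH enter as hypotheses, not as consequences of the definition of a Frobenius group. The paper assumes this as well. *)

(* Defs.v *)
From HB Require Import structures.
From mathcomp Require Import all_boot all_order all_algebra all_fingroup.
Set Implicit Arguments. Unset Strict Implicit. Unset Printing Implicit Defensive.
Import GRing.Theory Num.Theory.

(* Frobenius complement in the sense of the paper: a proper subgroup H of G
   with H ∩ x H x^{-1} = {e} for all x ∈ G \ H.  (In MathComp H :^ y = y^-1 H y,
   so x H x^{-1} is H :^ x^-1.) *)
Definition frobenius_complement (gT : finGroupType) (G H : {set gT}) : Prop :=
  H \proper G /\ (forall x, x \in (G :\: H)%g -> (H :&: H :^ x^-1 = 1)%g).

Definition frob_kernel n (G : {set 'S_n}) : {set 'S_n} :=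
  [set g in G | (g == 1%g) || [forall i, g i != i]].

(* Gale vector attached to u_i v_j (with j : 'I_h, j = 0 standing for v_1):
   the all-ones vector if j = 0, and -e_{j-1} otherwise; coordinate t of it. *)
Definition gale_coord (R : nzRingType) (h : nat) (j : 'I_h) (t : 'I_h.-1) : R :=
  if val j == 0%N then 1%R else if val j == t.+1 then (-1)%R else 0%R.

(* linear dependencies of the vertices w : I -> 'S_n (as permutation matrices) *)
Definition is_dependency (R : nzRingType) (I : finType) n (w : I -> 'S_n)
  (lam : I -> R) : Prop :=
  (\sum_(p : I) (lam p *: (perm_mx (w p) : 'M[R]_n)) = 0)%R.

(* Main.v *)
Require Import Defs.
From HB Require Import structures.
From mathcomp Require Import all_boot all_order all_algebra all_fingroup.
From mathcomp Require Import zify.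
Import GRing.Theory Num.Theory.


Definition fixc n (g : 'S_n) := #|[set a | g a == a]|.
Arguments fixc {n}.

Lemma fixcE n (g g' : 'S_n) : #|[pred a | g a == g' a]| = fixc (g * g'^-1)%g.
Proof.
rewrite /fixc; apply: eq_card => a; rewrite !inE permM.
by rewrite -[in RHS](inj_eq (@perm_inj _ g')) permKV.
Qed.

Lemma fixc1 n : fixc (1%g : 'S_n) = n.
Proof.
rewrite /fixc -[RHS]card_ord; apply: eq_card => a; by rewrite inE perm1 eqxx.
Qed.

Section Grp.
Variables (n : nat) (G H : {group 'S_n}).
Hypotheses (trG : [transitive G, on [set: 'I_n] | 'P])
  (gN : group_set (frob_kernel G)) (NH1 : (frob_kernel G :&: H = 1)%g)
  (NHG : (frob_kernel G * H)%g = G).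

Let NG := Group gN.

Lemma sNG : frob_kernel G \subset G.
Proof. by apply/subsetP => g; rewrite inE => /andP[]. Qed.

Lemma N_reg x : x \in frob_kernel G -> x != 1%g -> fixc x = 0%N.
Proof.
rewrite inE => /andP[_] /orP[->//|/forallP fx] _.
apply/eqP; rewrite cards_eq0; apply/eqP/setP => a; rewrite !inE.
by apply/negbTE.
Qed.

Lemma notN_fix x : x \in G -> x \notin frob_kernel G -> (0 < fixc x)%N.
Proof.
move=> Gx; rewrite inE Gx /= negb_or => /andP[_ /forallPn[a]].
rewrite negbK => xa; apply/card_gt0P; exists a; by rewrite inE.
Qed.

Lemma N_semireg u u' a : u \in frob_kernel G -> u' \in frob_kernel G ->
  u a = u' a -> u = u'.
Proof.
move=> Nu Nu' e.
have Nx : (u * u'^-1)%g \in NG by rewrite groupM ?groupV.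
move: Nx; rewrite inE => /andP[_] /orP[|/forallP/(_ a)].
  by rewrite mulg_eq1 invgK => /eqP.
by rewrite permM e permK eqxx.
Qed.

Lemma card_N_le : (#|frob_kernel G| <= n)%N.
Proof.
case/imsetP: trG => a0 _ _.
rewrite -(card_in_imset (f := fun u : 'S_n => u a0)); last first.
  by move=> u u' Nu Nu' /=; apply: N_semireg.
by rewrite -[X in (_ <= X)%N]card_ord max_card.
Qed.

Lemma burnside : (\sum_(g in G) fixc g)%N = #|G|.
Proof.
have := Frobenius_Cauchy (atrans_acts trG).
move: (trG); rewrite atrans_acts_card => /andP[_ /eqP ->]; rewrite mul1n => <-.
apply: eq_bigr => g _; apply: eq_card => a; rewrite !inE /=.
by rewrite sub1set inE.
Qed.

Lemma card_G : #|G| = (#|frob_kernel G| * #|H|)%N.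
Proof. by rewrite -{1}NHG (@TI_cardMg _ NG H NH1). Qed.

Lemma sum_split :
  (\sum_(g in G) fixc g)%N = (n + \sum_(g in G :\: frob_kernel G) fixc g)%N.
Proof.
rewrite (big_setID (frob_kernel G)) /= (setIidPr sNG) (bigD1 1%g) /=; last first.
  by rewrite inE group1 eqxx.
rewrite fixc1 big1 ?addn0 // => g /andP[Ng g1]; exact: N_reg.
Qed.

Lemma lbD : (#|G :\: frob_kernel G| <= \sum_(g in G :\: frob_kernel G) fixc g)%N.
Proof.
rewrite -sum1_card; apply: leq_sum => g; rewrite inE => /andP[nN Gg].
exact: notN_fix.
Qed.

Lemma card_N : #|frob_kernel G| = n.
Proof.
have := burnside; rewrite sum_split; have:= lbD; rewrite cardsD (setIidPr sNG).
have := card_N_le; have: (#|frob_kernel G| <= #|G|)%N := subset_leq_card sNG.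
move: (\sum_(g in _) _) => S; move: #|G| #|frob_kernel G| => a b; lia.
Qed.

Lemma fix1 x : x \in G -> x \notin frob_kernel G -> fixc x = 1%N.
Proof.
move=> Gx nNx.
have Ax : x \in G :\: frob_kernel G by rewrite inE Gx nNx.
have := burnside; rewrite sum_split (bigD1 x) //=.
have := notN_fix _ Gx nNx.
have h1 : (\sum_(g in G :\: frob_kernel G | g != x) 1 <=
           \sum_(g in G :\: frob_kernel G | g != x) fixc g)%N.
  apply: leq_sum => g /andP[]; rewrite inE => /andP[nN Gg] _.
  exact: notN_fix.
have h2 : #|G :\: frob_kernel G| = (1 + \sum_(g in G :\: frob_kernel G | g != x) 1)%N.
  by rewrite -sum1_card (bigD1 x).
move: h2; rewrite cardsD (setIidPr sNG) card_N.
have: (#|frob_kernel G| <= #|G|)%N := subset_leq_card sNG.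
rewrite card_N; move: h1; move: (\sum_(g in _ | _) fixc g) (\sum_(g in _ | _) 1%N) => S1 S2; move: #|G| => a; lia.
Qed.

Lemma fix_pair u u' v v' : u \in frob_kernel G -> u' \in frob_kernel G ->
  v \in H -> v' \in H ->
  fixc ((u * v) * (u' * v')^-1)%g =
    if (u == u') && (v == v') then n else if v == v' then 0%N else 1%N.
Proof.
move=> Nu Nu' Hv Hv'.
have sHG : H \subset G by rewrite -NHG (mulG_subr NG).
case: (eqVneq v v') => [->|vv'].
  rewrite andbT.
  have -> : (u * v' * (u' * v')^-1 = u * u'^-1)%g by rewrite invMg mulgA mulgK.
  case: eqP => [->|uu']; first by rewrite mulgV fixc1.
  apply: N_reg; first by rewrite (@groupM _ NG) ?(@groupV _ NG).
  by rewrite mulg_eq1 invgK; apply/eqP.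
rewrite andbF; apply: fix1.
  have Gu := subsetP sNG _ Nu; have Gu' := subsetP sNG _ Nu'.
  have Gv := subsetP sHG _ Hv; have Gv' := subsetP sHG _ Hv'.
  by rewrite !(groupM, groupV).
apply/negP => Nx.
have : (v * v'^-1)%g \in frob_kernel G :&: H.
  rewrite inE (groupM Hv) ?groupV // andbT.
  have -> : (v * v'^-1 = u^-1 * ((u * v) * (u' * v')^-1) * u')%g.
    by rewrite invMg !mulgA mulVg mul1g mulgKV.
  have NGu : u \in NG by []. have NGu' : u' \in NG by []. have NGx : ((u * v) * (u' * v')^-1)%g \in NG by [].
  exact: (@groupM _ NG _ _ (@groupM _ NG _ _ (@groupVr _ NG _ NGu) NGx) NGu').
by rewrite NH1 inE mulg_eq1 invgK (negbTE vv').
Qed.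

End Grp.
Local Open Scope ring_scope.

Lemma perm_mxE' (R : nzRingType) n (s : 'S_n) i j : (perm_mx s : 'M[R]_n) i j = (s i == j)%:R.
Proof. by rewrite /perm_mx !mxE. Qed.

Lemma sum_bool_card (R : nzRingType) (T : finType) (P : pred T) :
  \sum_(a : T) ((P a)%:R : R) = #|P|%:R.
Proof.
rewrite -natr_sum; congr (_%:R); rewrite -sum1_card [RHS]big_mkcond /=.
by apply: eq_bigr => i _; rewrite unfold_in; case: (P i).
Qed.

Lemma sum_pair (R : nmodType) (I J : finType) (F : I * J -> R) :
  \sum_p F p = \sum_i \sum_j F (i, j).
Proof. by rewrite [RHS]pair_big; apply: eq_bigr => -[i j]. Qed.

Lemma gale_sum (R : nzRingType) h (t : 'I_h.-1) : \sum_(j : 'I_h) gale_coord R j t = 0.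
Proof.
case: h t => [|h] t; first by case: t.
rewrite big_ord_recl /gale_coord /=.
under eq_bigr do rewrite /bump leq0n add1n eqSS.
rewrite (bigD1 t) //= eqxx big1 ?addr0 ?subrr //.
by move=> k kt; rewrite ifF //; exact: negbTE kt.
Qed.

Lemma gale_indep (R : nzRingType) m h (i0 : 'I_m) (c : 'I_h.-1 -> R) :
  (forall p : 'I_m * 'I_h, \sum_t c t * gale_coord R p.2 t = 0) -> forall t, c t = 0.
Proof.
case: h c => [|h] c H t; first by case: t.
have := H (i0, lift ord0 t); rewrite /gale_coord /= /bump leq0n add1n.
rewrite (bigD1 t) //= eqxx big1.
  by rewrite addr0 mulrN1 => /eqP; rewrite oppr_eq0 => /eqP.
move=> k kt; rewrite eqSS.
rewrite ifF ?mulr0 //.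
apply/eqP => e; move/eqP: kt; apply; apply: val_inj; exact: (esym e).
Qed.

Lemma gale_span (R : realFieldType) m h (mu : 'I_m * 'I_h -> R) :
  (0 < m)%N ->
  (forall q, \sum_p mu p * (if p == q then m%:R else if p.2 == q.2 then 0 else 1) = 0) ->
  exists c : 'I_h.-1 -> R, forall p, mu p = \sum_t c t * gale_coord R p.2 t.
Proof.
move=> m0 Eq.
case: h mu Eq => [|h] mu Eq; first by exists (fun _ => 0) => -[? []].
have key : forall i' j', m%:R * mu (i', j') + \sum_i \sum_(j | j != j') mu (i, j) = 0.
  move=> i' j'; rewrite -[RHS](Eq (i', j')) sum_pair; symmetry.
  transitivity (\sum_i (mu (i, j') * (if i == i' then m%:R else 0) +
                        \sum_(j | j != j') mu (i, j))).
    apply: eq_bigr => i _; rewrite (bigD1 j') //=; congr (_ + _).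
      by rewrite xpair_eqE eqxx andbT.
    by apply: eq_bigr => j /negbTE jj; rewrite xpair_eqE jj andbF mulr1.
  rewrite big_split /=; congr (_ + _).
  rewrite (bigD1 i') //= eqxx big1 ?addr0 1?mulrC // => i /negbTE ->.
  by rewrite mulr0.
have m0R : (m%:R : R) != 0 by rewrite pnatr_eq0 -lt0n.
have cst : forall i i' j, mu (i, j) = mu (i', j).
  move=> i i' j; apply: (mulfI m0R).
  apply: (@addIr _ (\sum_i1 \sum_(j1 | j1 != j) mu (i1, j1))).
  by rewrite !key.
set i0 := Ordinal m0.
set phi := fun j => mu (i0, j).
have sum0 : \sum_j phi j = 0.
  have := key i0 ord0.
  under eq_bigr do under eq_bigr do rewrite (cst _ i0).
  rewrite sumr_const card_ord => e.
  rewrite (bigD1 ord0) //=.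
  have : m%:R * (phi ord0 + \sum_(j | j != ord0) phi j) = 0.
    by rewrite mulrDr [X in _ + X]mulr_natl; exact: e.
  by move/eqP; rewrite mulf_eq0 (negbTE m0R) /= => /eqP.
exists (fun t => - phi (lift ord0 t)) => -[i j] /=.
rewrite (cst i i0) -/(phi j).
case: (unliftP ord0 j) => [t ->|->].
  rewrite /gale_coord /= /bump leq0n add1n.
  rewrite (bigD1 t) //= eqxx big1.
    by rewrite addr0 mulrN1 opprK.
  move=> k kt; rewrite eqSS ifF ?mulr0 //.
  apply/eqP => e; move/eqP: kt; apply; apply: val_inj; exact: (esym e).
rewrite /gale_coord /=.
under eq_bigr do rewrite mulr1.
move: sum0; rewrite big_ord_recl => /eqP; rewrite addr_eq0 => /eqP ->.
by rewrite sumrN.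
Qed.

Theorem proposition5 (R : realFieldType) (n : nat) (G H : {group 'S_n})
  (u : 'I_#|frob_kernel G| -> 'S_n) (v : 'I_#|H| -> 'S_n) :
  (* G is a Frobenius permutation group with complement H *)
  [transitive G, on [set: 'I_n] | 'P] ->
  frobenius_complement G H ->
  (* the standard facts about the kernel N recorded in the paper *)
  group_set (frob_kernel G) ->
  frob_kernel G :&: H = 1%g ->
  (frob_kernel G * H)%g = G ->
  (* N = {u_1, ..., u_|N|} and H = {v_1, ..., v_h} *)
  injective u -> (forall i, u i \in frob_kernel G) ->
  injective v -> (forall j, v j \in H) ->
  let w := fun p : 'I_#|frob_kernel G| * 'I_#|H| => (u p.1 * v p.2)%g in
  let lam := fun (t : 'I_#|H|.-1) (p : 'I_#|frob_kernel G| * 'I_#|H|) =>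
               gale_coord R p.2 t in
  (* the rows of the matrix whose column at u_i v_j is the stated Gale vector
     form a basis of the space of linear dependencies of the vertices of P(G) *)
  [/\ forall t, is_dependency w (lam t),
      forall c : 'I_#|H|.-1 -> R,
        (forall p, \sum_t c t * lam t p = 0) -> forall t, c t = 0
    & forall mu, is_dependency w mu ->
        exists c : 'I_#|H|.-1 -> R, forall p, mu p = \sum_t c t * lam t p].
Proof.
move=> trG _ gN NH1 NHG uinj uN vinj vH w lam.
have cardN : #|frob_kernel G| = n := @card_N n G trG gN.
have N0 : (0 < #|frob_kernel G|)%N.
  by apply/card_gt0P; exists 1%g; rewrite inE group1 eqxx.
have K1 : forall g : 'S_n, \sum_i (perm_mx (u i * g)%g : 'M[R]_n) = const_mx 1.
  move=> g; apply/matrixP => a b; rewrite summxE !mxE.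
  under eq_bigr do rewrite perm_mxE'.
  rewrite sum_bool_card.
  have finj : injective (fun i => u i a).
    by move=> i i' /= e; apply: uinj; apply: (@N_semireg n G gN _ _ a (uN i) (uN i') e).
  have : (g^-1 b)%g \in codom (fun i => u i a).
    by apply: (inj_card_onto finj); rewrite !card_ord cardN.
  case/codomP => i0 e0.
  rewrite (@eq_card _ _ (pred1 i0)) ?card1 // => i; rewrite unfold_in /= permM.
  by rewrite (canF_eq (permK g)) e0 (inj_eq finj).
split.
- move=> t; rewrite /is_dependency /lam /w. rewrite sum_pair exchange_big /=.
  under eq_bigr do rewrite -scaler_sumr K1.
  by rewrite -scaler_suml gale_sum scale0r.
- move=> c Hc; exact: (@gale_indep R _ _ (Ordinal N0) c Hc).
move=> mu D; apply: gale_span => // q.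
have E : forall a, \sum_p mu p * ((w p a == w q a))%:R = 0.
  move=> a; move/matrixP: D => /(_ a (w q a)); rewrite summxE !mxE.
  by under eq_bigr do rewrite mxE perm_mxE'.
transitivity (\sum_a \sum_p mu p * ((w p a == w q a))%:R); last first.
  by apply: big1 => a _; exact: E a.
rewrite exchange_big; apply: eq_bigr => p _; rewrite -mulr_sumr sum_bool_card.
congr (_ * _).
rewrite (eq_card (B := [pred a | w p a == w q a])) // fixcE.
clear E; case: p q => [i j] [i' j']; rewrite /w /=.
rewrite (@fix_pair n G H trG gN NH1 NHG) ?uN ?vH // !(inj_eq uinj, inj_eq vinj) xpair_eqE.
by case: (i == i'); case: (j == j') => //=; rewrite cardN.
Qed.
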